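(* Let $X\in\mathbb{R}^{n\times d}$, $y\in\mathbb{R}^n$, and let $g:\mathbb{R}^d\to(-\infty,\infty]$ be a proper lower semicontinuous convex function with $g(k\beta)=kg(\beta)$ for all $k\ge0$, $\beta\in\mathbb{R}^d$, such that there exists $\beta\in\mathrm{relint}(\mathrm{dom}(g))$ and $P(\beta):=\frac12\|y-X\beta\|_2^2+g(\beta)$ attains its infimum. Let $-f^\star(-\theta)=-\frac12\|\theta\|_2^2+y^\top\theta$ and define \[ u^{\mathrm{DS}}(\theta;\tilde\beta)=\begin{cases}-f^\star(-\theta) & \text{if } g(\tilde\beta)-\theta^\top X\tilde\beta\ge0,\\ -\infty & \text{otherwise},\end{cases}\qquad u^{\mathrm{GM}}(\theta;\tilde\beta)=\begin{cases}-f^\star(-\theta) & \text{if } -f^\star(-\theta)\le P(\tilde\beta),\\ -\infty & \text{otherwise}.\end{cases} \] Then $u^{\mathrm{DS}}(\theta;\tilde\beta)\le u^{\mathrm{GM}}(\theta;\tilde\beta)$ for all $\tilde\beta\in\mathbb{R}^d$ and $\theta\in\mathbb{R}^n$.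
   Context: $\mathrm{dom}(g)=\{\beta:|g(\beta)|<\infty\}$; $\mathrm{relint}$ is relative interior; $f(z)=\frac12\|y-z\|_2^2$ and $f^\star$ is its Fenchel conjugate. *)

(* Defs.v *)
From HB Require Import structures.
From mathcomp Require Import all_boot all_order all_algebra.
From mathcomp Require Import all_classical all_reals all_analysis.
Set Implicit Arguments. Unset Strict Implicit. Unset Printing Implicit Defensive.
Import Order.TTheory GRing.Theory Num.Theory.
Import numFieldNormedType.Exports.
Local Open Scope classical_set_scope.
Local Open Scope ring_scope.

Definition sqnorm (R : realType) (m : nat) (v : 'cV[R]_m) : R :=
  \sum_(i < m) (v i 0) ^+ 2.

Definition dotv (R : realType) (m : nat) (u v : 'cV[R]_m) : R :=
  \sum_(i < m) u i 0 * v i 0.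

Definition edom (R : realType) (T : Type) (g : T -> \bar R) : set T :=
  [set b | g b \is a fin_num].

Definition proper_fun (R : realType) (T : Type) (g : T -> \bar R) : Prop :=
  (forall b, g b != -oo%E) /\ (exists b, g b \is a fin_num).

Definition convex_efun (R : realType) (m : nat) (g : 'cV[R]_m -> \bar R) : Prop :=
  forall (a : R) (x y : 'cV[R]_m), 0 <= a <= 1 ->
    (g (a *: x + (1 - a) *: y)%R <= a%:E * g x + (1 - a)%:E * g y)%E.

Definition pos_homogeneous (R : realType) (m : nat) (g : 'cV[R]_m -> \bar R) : Prop :=
  forall (k : R) (b : 'cV[R]_m), 0 <= k -> g (k *: b)%R = (k%:E * g b)%E.

Definition affine_hull (R : realType) (m : nat) (S : set 'cV[R]_m) : set 'cV[R]_m :=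
  [set z | exists (k : nat) (a : 'I_k -> R) (v : 'I_k -> 'cV[R]_m),
      (forall i, S (v i)) /\ \sum_(i < k) a i = 1 /\ z = \sum_(i < k) a i *: v i].

Definition relint (R : realType) (m : nat) (S : set 'cV[R]_m) : set 'cV[R]_m :=
  [set x | S x /\ exists2 e : R, 0 < e &
     forall z, affine_hull S z -> `|z - x| < e -> S z].

Definition Pobj (R : realType) (n d : nat) (X : 'M[R]_(n, d)) (y : 'cV[R]_n)
  (g : 'cV[R]_d -> \bar R) (b : 'cV[R]_d) : \bar R :=
  ((sqnorm (y - X *m b) / 2)%:E + g b)%E.

(* dual objective -f^*(-theta) = -1/2 ||theta||^2 + y^T theta *)
Definition dual_obj (R : realType) (n : nat) (y theta : 'cV[R]_n) : R :=
  - (sqnorm theta / 2) + dotv y theta.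

Definition u_DS (R : realType) (n d : nat) (X : 'M[R]_(n, d)) (y : 'cV[R]_n)
  (g : 'cV[R]_d -> \bar R) (theta : 'cV[R]_n) (bt : 'cV[R]_d) : \bar R :=
  if `[< (0 <= g bt - (dotv theta (X *m bt))%:E)%E >]
  then (dual_obj y theta)%:E else -oo%E.

Definition u_GM (R : realType) (n d : nat) (X : 'M[R]_(n, d)) (y : 'cV[R]_n)
  (g : 'cV[R]_d -> \bar R) (theta : 'cV[R]_n) (bt : 'cV[R]_d) : \bar R :=
  if `[< ((dual_obj y theta)%:E <= Pobj X y g bt)%E >]
  then (dual_obj y theta)%:E else -oo%E.

(* Main.v *)
Require Import Defs.
From HB Require Import structures.
From mathcomp Require Import all_boot all_order all_algebra.
From mathcomp Require Import all_classical all_reals all_analysis.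
From mathcomp Require Import ring lra.
Import Order.TTheory GRing.Theory Num.Theory.
Import numFieldNormedType.Exports.
Local Open Scope classical_set_scope.
Local Open Scope ring_scope.

Lemma weak_real (R : realType) (n d : nat) (X : 'M[R]_(n, d)) (y : 'cV[R]_n)
  (theta : 'cV[R]_n) (bt : 'cV[R]_d) (c : R) :
  dotv theta (X *m bt) <= c ->
  dual_obj y theta <= sqnorm (y - X *m bt) / 2 + c.
Proof.
move=> hc; rewrite /dual_obj /sqnorm /dotv in hc *.
apply: (le_trans _ (lerD (lexx _) hc)).
have key : forall i : 'I_n,
  - ((theta i 0) ^+ 2 / 2) + y i 0 * theta i 0 <=
  ((y - X *m bt) i 0) ^+ 2 / 2 + theta i 0 * (X *m bt) i 0.
  move=> i.
  have -> : (y - X *m bt) i 0 = y i 0 - (X *m bt) i 0.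
    by rewrite [LHS]mxE [in LHS]mxE.
  set a := theta i 0; set b := y i 0; set v := (X *m bt) i 0.
  have h : 0 <= (b - v - a) ^+ 2 by apply: sqr_ge0.
  rewrite -subr_ge0.
  have -> : (b - v) ^+ 2 / 2 + a * v - (- (a ^+ 2 / 2) + b * a) = (b - v - a) ^+ 2 / 2 by field; lra.
  by apply: divr_ge0.
have H : \sum_(i < n) (- ((theta i 0) ^+ 2 / 2) + y i 0 * theta i 0) <=
  \sum_(i < n) (((y - X *m bt) i 0) ^+ 2 / 2 + theta i 0 * (X *m bt) i 0).
  by apply: ler_sum => i _; exact: key.
move: H; rewrite big_split /= big_split /= -mulr_suml.
suff -> : \sum_(i < n) - (theta i 0 ^+ 2 / 2) = - ((\sum_(i < n) theta i 0 ^+ 2) / 2).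
  exact: id.
by rewrite sumrN mulr_suml.
Qed.

Theorem theorem10 (R : realType) (n d : nat) (X : 'M[R]_(n, d)) (y : 'cV[R]_n)
  (g : 'cV[R]_d -> \bar R)
  (g_proper : proper_fun g)
  (g_lsc : lower_semicontinuous g)
  (g_convex : convex_efun g)
  (g_hom : pos_homogeneous g)
  (g_relint : exists b, relint (edom g) b)
  (P_attains : exists bs, forall b, (Pobj X y g bs <= Pobj X y g b)%E) :
  forall (bt : 'cV[R]_d) (theta : 'cV[R]_n),
    (u_DS X y g theta bt <= u_GM X y g theta bt)%E.
Proof.
move=> bt theta; rewrite /u_DS /u_GM.
case: asboolP => [h|_]; last by rewrite leNye.
case: asboolP => [//|hn]; exfalso; apply: hn.
rewrite /Pobj.
have gn := (g_proper.1 bt).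
move: h gn; case: (g bt) => [c| |] //= h _.
  rewrite lee_fin; apply: weak_real.
  by move: h; rewrite -EFinB lee_fin subr_ge0.
by rewrite leey.
Qed.
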